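(* Let $A$ be a nontrivial closed class of decision tables from $\mathcal M_2^\infty$ and $\psi$ a bounded complexity measure. If $\mathcal H^\infty_{\psi,A}$ is everywhere defined, then for every $n\in\omega$ the value $Z_{\psi,A}(n)$ is defined and $\mathcal H^\infty_{\psi,A}(3n)\ge\sqrt{2Z_{\psi,A}(n)}-3$.
   Context: Notation: $\omega=\{0,1,2,\dots\}$; $\mathcal P(\omega)$ is the set of nonempty finite subsets of $\omega$; $E_2=\{0,1\}$. $P=\{f_i:i\in\omega\}$ is a set of attributes, $f_i\neq f_j$ for $i\ne j$. Decision tables: $\mathcal M_2^\infty$ is the set of rectangular tables filled with numbers from $E_2$, whose columns are labeled with pairwise different attributes from $P$, whose rows are pairwise different, and each row of which is labeled with a set from $\mathcal P(\omega)$ (its set of decisions). The empty table (no rows) is denoted $\Lambda$ and belongs to $\mathcal M_2^\infty$. For $T\in\mathcal M_2^\infty$: $\Pi(T)$ is the intersection of the decision sets of all rows (common decisions); $\mathrm{At}(T)$ is the set of attributes labeling columns; $N(T)$ is the number of rows. For nonempty $T$ and a word $\alpha=(f_{i_1},\delta_1)\cdots(f_{i_m},\delta_m)$ with $f_{i_j}\in\mathrm{At}(T)$, $\delta_j\in E_2$, $T\alpha$ is the subtable of $T$ consisting of the rows having value $\delta_j$ in the column $f_{i_j}$ for all $j$; $T\lambda=T$ for the empty word $\lambda$. Operations: for $D\subseteq\mathrm{At}(T)$, $I(D,T)$ is obtained from $T$ by deleting the columns labeled with attributes from $D$ and, in each group of rows coinciding on the remaining columns, keeping only the first row; $I(\mathrm{At}(T),T)=\Lambda$.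 For $\nu:E_2^{|\mathrm{At}(T)|}\to\mathcal P(\omega)$, $J(\nu,T)$ is obtained by replacing the decision set of each row $\bar\delta$ by $\nu(\bar\delta)$. $[T]=\{J(\nu,I(D,T)):D\subseteq\mathrm{At}(T),\ \nu:E_2^{|\mathrm{At}(T)\setminus D|}\to\mathcal P(\omega)\}$; for nonempty $A\subseteq\mathcal M_2^\infty$, $[A]=\bigcup_{T\in A}[T]$. $A$ is a closed class if $[A]=A$; nontrivial if it contains a nonempty table. Decision trees: a $2$-decision tree is a finite directed rooted tree with at least two nodes in which the root and the edges leaving the root are unlabeled, each terminal node is labeled with a decision from $\omega$, and each other node is labeled with an attribute from $P$, each edge leaving such a node being labeled with a number from $E_2$. $\mathrm{At}(\Gamma)$ is the set of attributes labeling nodes of $\Gamma$. For a complete path $\tau=v_1,d_1,\dots,v_m,d_m,v_{m+1}$ (from the root to a terminal node), $\pi(\tau)=\lambda$ if $m=1$, and otherwise $\pi(\tau)=(f_{i_2},\delta_2)\cdots(f_{i_m},\delta_m)$ where $v_j$ is labeled $f_{i_j}$ and $d_j$ is labeled $\delta_j$; $T(\tau)=T\pi(\tau)$. For $T\ne\Lambda$, a nondeterministic decision tree for $T$ is a $2$-decision tree $\Gamma$ with $\mathrm{At}(\Gamma)\subseteq\mathrm{At}(T)$ such that every row of $T$ belongs to $T(\tau)$ for some complete path $\tau$, and for every complete path $\tau$ either $T(\tau)=\Lambda$ or the decision at the terminal node of $\tau$ belongs to $\Pi(T(\tau))$. A deterministic decision tree for $T$ is a nondeterministic decision tree for $T$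 in which, additionally, exactly one edge leaves the root and the edges leaving any node that is neither the root nor terminal are labeled with pairwise different numbers. Complexity measures: a partially bounded complexity measure is a function $\psi:P^*\to\omega$ on finite words over $P$ such that for all words $\alpha_1,\alpha_2$: $\psi(\alpha_1)=0$ iff $\alpha_1=\lambda$; $\psi(\alpha_1)$ is invariant under permutation of letters; $\psi(\alpha_1)\le\psi(\alpha_1\alpha_2)$; $\psi(\alpha_1\alpha_2)\le\psi(\alpha_1)+\psi(\alpha_2)$. It is bounded if in addition $\psi(\alpha)\ge|\alpha|$ for all $\alpha$. $\psi$ is extended to words $(f_{i_1},\delta_1)\cdots(f_{i_m},\delta_m)$ by $\psi(f_{i_1}\cdots f_{i_m})$ ($\psi(\lambda)=0$). For a $2$-decision tree $\Gamma$, $\psi(\Gamma)=\max_\tau\psi(\pi(\tau))$ over complete paths. For $T\ne\Lambda$, $\psi^d(T)$ (resp. $\psi^a(T)$) is the minimum of $\psi(\Gamma)$ over deterministic (resp. nondeterministic) decision trees $\Gamma$ for $T$; $\psi^d(\Lambda)=\psi^a(\Lambda)=0$. Parameters: $m_\psi(T)=\max\{\psi(f_i):f_i\in\mathrm{At}(T)\}$, $m_\psi(\Lambda)=0$. A table $Q\in\mathcal M_2^\infty$ is complete if $N(Q)=2^{|\mathrm{At}(Q)|}$; $Z(T)$ is the maximum number of columns of a complete table in $[T]$ if such tables exist, and $0$ otherwise; $Z(\Lambda)=0$. For $n\in\omega$: $A_\psi(n)=\{T\in A:m_\psi(T)\le n\}$; $Z_{\psi,A}(n)$ is undefined if $\{Z(T):T\in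 A_\psi(n)\}$ is infinite, else its maximum; $\mathcal H^\infty_{\psi,A}(n)$ is undefined if $\{\psi^d(T):T\in A,\psi^a(T)\le n\}$ is infinite, else its maximum. *)

(* Defs.v *)
From mathcomp Require Import all_boot.
From mathcomp Require Import finmap.
Set Implicit Arguments. Unset Strict Implicit. Unset Printing Implicit Defensive.
Local Open Scope fset_scope.

(** Attributes f_i are identified with their index i : nat; E_2 = bool
    (false = 0, true = 1); words over P are [seq nat]. *)

(** A (raw) table: column labels, and rows = (row of values, decision set). *)
Record table := Table {
  cols : seq nat;
  rows : seq (seq bool * {fset nat})
}.

Definition Lambda : table := Table [::] [::].

(** Membership in M_2^infty.  The empty table Lambda is the only table
    without rows, and the only table without columns. *)
Definition wf_table (T : table) : bool :=
  [&& uniq (cols T),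
      all (fun r => size r.1 == size (cols T)) (rows T),
      uniq (map fst (rows T)),
      all (fun r => r.2 != fset0) (rows T) &
      (size (rows T) == 0) == (size (cols T) == 0)].

Definition nonempty_table (T : table) : bool := size (rows T) != 0.

Definition val_at (T : table) (r : seq bool) (a : nat) : bool :=
  nth false r (index a (cols T)).

Definition subtable (T : table) (w : seq (nat * bool)) : table :=
  let rs := filter (fun r => all (fun ab => val_at T r.1 ab.1 == ab.2) w) (rows T) in
  if rs is [::] then Lambda else Table (cols T) rs.

Fixpoint keep_first (s : seq (seq bool * {fset nat})) : seq (seq bool * {fset nat}) :=
  match s with
  | [::] => [::]
  | r :: s' => r :: filter (fun r' => r'.1 != r.1) (keep_first s')
  end.

Definition opI (D : seq nat) (T : table) : table :=
  let cs := filter (fun a => a \notin D) (cols T) in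
  if cs is [::] then Lambda
  else Table cs (keep_first (map (fun r => ([seq val_at T r.1 a | a <- cs], r.2)) (rows T))).

Definition opJ (nu : seq bool -> {fset nat}) (T : table) : table :=
  Table (cols T) (map (fun r => (r.1, nu r.1)) (rows T)).

Definition in_closure (T Q : table) : Prop :=
  exists (D : seq nat) (nu : seq bool -> {fset nat}),
    {subset D <= cols T} /\ (forall x, nu x != fset0) /\ Q = opJ nu (opI D T).

Definition in_M (A : table -> Prop) : Prop := forall T, A T -> wf_table T.

Definition closed_class (A : table -> Prop) : Prop :=
  forall Q, A Q <-> exists T, A T /\ in_closure T Q.

Definition nontrivial (A : table -> Prop) : Prop :=
  exists T, A T /\ nonempty_table T.

Inductive dnode :=
| DLeaf of nat
| DNode of nat & seq (bool * dnode).

(** A 2-decision tree is given by the list of subtrees hanging from the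
    (unlabelled) root via unlabelled edges. *)
Definition dtree := seq dnode.

Fixpoint wf_node (t : dnode) : bool :=
  match t with
  | DLeaf _ => true
  | DNode _ ch => (size ch != 0) && all (fun bc => let: (_, c) := bc in wf_node c) ch
  end.

Definition wf_tree (G : dtree) : bool := (size G != 0) && all wf_node G.

Fixpoint det_node (t : dnode) : bool :=
  match t with
  | DLeaf _ => true
  | DNode _ ch => uniq (map fst ch) && all (fun bc => let: (_, c) := bc in det_node c) ch
  end.

Definition det_tree (G : dtree) : bool := (size G == 1) && all det_node G.

Fixpoint node_attrs (t : dnode) : seq nat :=
  match t with
  | DLeaf _ => [::]
  | DNode a ch => a :: flatten (map (fun bc => let: (_, c) := bc in node_attrs c) ch)
  end.

Definition tree_attrs (G : dtree) : seq nat := flatten (map node_attrs G).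

Fixpoint node_paths (t : dnode) : seq (seq (nat * bool) * nat) :=
  match t with
  | DLeaf d => [:: ([::], d)]
  | DNode a ch =>
      flatten (map (fun bc => let: (b, c) := bc in
                     map (fun p => ((a, b) :: p.1, p.2)) (node_paths c)) ch)
  end.

Definition tree_paths (G : dtree) : seq (seq (nat * bool) * nat) :=
  flatten (map node_paths G).

Definition is_ndt (T : table) (G : dtree) : Prop :=
  [/\ wf_tree G,
      {subset tree_attrs G <= cols T},
      (forall r, r \in rows T ->
         exists2 p, p \in tree_paths G & r \in rows (subtable T p.1)) &
      (forall p, p \in tree_paths G ->
         rows (subtable T p.1) = [::] \/
         (forall r, r \in rows (subtable T p.1) -> p.2 \in r.2))].

Definition is_dt (T : table) (G : dtree) : Prop := is_ndt T G /\ det_tree G.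

Definition partially_bounded (psi : seq nat -> nat) : Prop :=
  [/\ (forall w, psi w = 0 <-> w = [::]),
      (forall w1 w2, perm_eq w1 w2 -> psi w1 = psi w2),
      (forall w1 w2, psi w1 <= psi (w1 ++ w2)) &
      (forall w1 w2, psi (w1 ++ w2) <= psi w1 + psi w2)].

Definition bounded_measure (psi : seq nat -> nat) : Prop :=
  partially_bounded psi /\ (forall w, size w <= psi w).

Definition tree_psi (psi : seq nat -> nat) (G : dtree) : nat :=
  \max_(p <- tree_paths G) psi (map fst p.1).

Definition is_psid (psi : seq nat -> nat) (T : table) (k : nat) : Prop :=
  if nonempty_table T then
    (exists G, is_dt T G /\ tree_psi psi G = k) /\
    (forall G, is_dt T G -> k <= tree_psi psi G)
  else k = 0.

Definition is_psia (psi : seq nat -> nat) (T : table) (k : nat) : Prop :=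
  if nonempty_table T then
    (exists G, is_ndt T G /\ tree_psi psi G = k) /\
    (forall G, is_ndt T G -> k <= tree_psi psi G)
  else k = 0.

Definition m_psi (psi : seq nat -> nat) (T : table) : nat :=
  \max_(a <- cols T) psi [:: a].

Definition complete (Q : table) : bool := size (rows Q) == 2 ^ size (cols Q).

Definition is_Z (T : table) (k : nat) : Prop :=
  (exists Q, [/\ in_closure T Q, complete Q, size (cols Q) = k &
                 forall Q', in_closure T Q' -> complete Q' -> size (cols Q') <= k])
  \/ ((forall Q, in_closure T Q -> ~~ complete Q) /\ k = 0).

Definition is_max (S : nat -> Prop) (m : nat) : Prop := S m /\ forall k, S k -> k <= m.

Definition Zset (psi : seq nat -> nat) (A : table -> Prop) (n : nat) (k : nat) : Prop :=
  exists T, [/\ A T, m_psi psi T <= n & is_Z T k].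

Definition Hset (psi : seq nat -> nat) (A : table -> Prop) (n : nat) (k : nat) : Prop :=
  exists T, [/\ A T, (exists2 a, is_psia psi T a & a <= n) & is_psid psi T k].

Definition Z_value psi A n z := is_max (Zset psi A n) z.
Definition Z_defined psi A n := exists z, Z_value psi A n z.

Definition H_value psi A n h := is_max (Hset psi A n) h.
Definition H_defined psi A n := exists h, H_value psi A n h.

(* Main.v *)
Require Import Defs.
From mathcomp Require Import all_boot finmap.
From mathcomp Require Import zify.
From Stdlib Require Import Lia Classical.
Set Implicit Arguments. Unset Strict Implicit. Unset Printing Implicit Defensive.
Fixpoint tri (s : nat) : nat := if s is s'.+1 then tri s' + s'.+1 else 0.

Lemma tri_mono s s' : s <= s' -> tri s <= tri s'.
Proof.
elim: s' => [|s' IH]; first by rewrite leqn0 => /eqP ->.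
rewrite leq_eqVlt => /orP [/eqP -> //|]; rewrite ltnS => /IH /= H; lia.
Qed.

Lemma tri_lt s s' j : s < s' -> j <= s -> tri s + j < tri s'.
Proof. move=> lt le; have := tri_mono lt => /=; lia. Qed.

Definition nid (u : nat * nat) : nat := tri (u.1 + u.2) + u.2.

Lemma nid_inj : injective nid.
Proof.
move=> [i j] [i' j']; rewrite /nid /= => E.
case: (ltngtP (i + j) (i' + j')) => H.
- have := @tri_lt (i+j) (i'+j') j H (leq_addl _ _); lia.
- have := @tri_lt (i'+j') (i+j) j' H (leq_addl _ _); lia.
- rewrite H in E; have Ej : j = j' by lia.
  by subst j'; have -> : i = i' by lia.
Qed.

Lemma tri2 s : 2 * tri s = s * s.+1.
Proof. elim: s => //= s IH; rewrite mulnDr IH; lia. Qed.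

Lemma tri_ex z : exists t, tri t <= z < tri t.+1.
Proof.
elim: z => [|z [t /andP [H1 H2]]]; first by exists 0.
case: (ltnP z.+1 (tri t.+1)) => H3.
- exists t; rewrite H3 andbT; lia.
- exists t.+1; apply/andP; split; first by [].
  rewrite /= -/(tri t.+1) in H2 H3 *; simpl in *; lia.
Qed.

Section Pyr.
Variable t : nat.
Hypothesis t_gt0 : 0 < t.

Definition nodes : seq (nat * nat) :=
  [seq (i, j) | i <- iota 0 t, j <- iota 0 (t - i)].

Lemma mem_nodes u : (u \in nodes) = (u.1 + u.2 < t).
Proof.
case: u => i j /=; apply/allpairsPdep/idP => [[a [b [Ha Hb [-> ->]]]]|H].
- move: Ha Hb; rewrite !mem_iota; lia.
- exists i, j; rewrite !mem_iota; split => //; lia.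
Qed.

Definition nid_lt u : u.1 + u.2 < t -> nid u < tri t.
Proof. case: u => i j /= H; rewrite /nid /=; apply: tri_lt => //; lia. Qed.

Definition X (x : seq bool) (u : nat * nat) := nth false x (nid u).

Definition holds0 (u : nat * nat) (x : seq bool) : bool :=
  ~~ X x u && (if u.1 + u.2 == t.-1 then true
               else X x (u.1.+1, u.2) && X x (u.1, u.2.+1)).

Lemma covering x : X x (0,0) \/ exists2 u, u \in nodes & holds0 u x.
Proof.
case E: (X x (0,0)); [by left|right].
suff H : forall m i j, i + j + m = t.-1 -> ~~ X x (i,j) ->
           exists2 u, u \in nodes & holds0 u x.
  by apply: (H t.-1 0 0) => //; rewrite E.
elim=> [|m IH] i j Hm Hx.
- exists (i,j); first by rewrite mem_nodes /=; lia.
  by rewrite /holds0 Hx /= (_ : i + j == t.-1) //; apply/eqP; lia.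
- case E1: (X x (i.+1, j)); case E2: (X x (i, j.+1)).
  + exists (i,j); first by rewrite mem_nodes /=; lia.
    rewrite /holds0 Hx /= E1 E2; by case: ifP.
  + by apply: (IH i j.+1); [lia| rewrite E2].
  + by apply: (IH i.+1 j); [lia| rewrite E1].
  + by apply: (IH i.+1 j); [lia| rewrite E1].
Qed.

Definition cnt (d : seq bool) k := count id (take k d).

Definition onp (d : seq bool) (u : nat * nat) : bool :=
  (u.1 + u.2 < t) && (cnt d (u.1 + u.2) == u.2).

Lemma cnt_le d s s' : s <= s' -> cnt d s <= cnt d s' <= cnt d s + (s' - s).
Proof.
move=> H; rewrite /cnt -(subnKC H) takeD count_cat.
apply/andP; split; first by apply: leq_addr.
rewrite leq_add2l; apply: leq_trans (count_size _ _) _; rewrite size_take_min; lia.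
Qed.

Lemma cnt_S d k : k < size d -> cnt d k.+1 = cnt d k + nth false d k.
Proof.
move=> H; rewrite /cnt (take_nth false H) -cats1 count_cat /= addn0.
by [].

Qed.

Lemma onp_step d u : size d = t.-1 -> onp d u -> u.1 + u.2 != t.-1 ->
  onp d (u.1.+1, u.2) || onp d (u.1, u.2.+1).
Proof.
case: u => i j Hs /andP [H1 /eqP H2] H3; rewrite /onp /=; simpl in H1, H2, H3.
have Hk : i + j < size d by rewrite Hs; lia.
have := cnt_S Hk; case: (nth false d (i + j)) => /= E.
- apply/orP; right; rewrite /cnt -addnS in E *; rewrite E -/(cnt d (i+j)) H2; lia.
- apply/orP; left; rewrite /cnt addSn in E *; rewrite E -/(cnt d (i+j)) H2; lia.
Qed.

Lemma onp_apex d : onp d (0,0).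
Proof. by rewrite /onp /= t_gt0 /cnt take0. Qed.

Definition br (d : seq bool) k :=
  take k d ++ nseq (t.-1 - k) (~~ nth false d k).

Lemma size_br d k : size d = t.-1 -> k < t.-1 -> size (br d k) = t.-1.
Proof. move=> Hs Hk; rewrite /br size_cat size_take_min size_nseq Hs; lia. Qed.

Lemma size_takek (d : seq bool) k : size d = t.-1 -> k < t.-1 -> size (take k d) = k.
Proof. move=> Hs Hk; rewrite size_take_min; lia. Qed.

Lemma cnt_br_lo d k s : size d = t.-1 -> k < t.-1 -> s <= k ->
  cnt (br d k) s = cnt d s.
Proof.
move=> Hs Hk Hsk; rewrite /cnt /br take_cat (size_takek Hs Hk).
case: ifP => H; first by rewrite take_takel.
have E : s = k by lia. by rewrite E subnn take0 cats0.
Qed.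

Lemma count_nseq_id n b : count id (nseq n b) = b * n.
Proof. elim: n => [|n IH] /=; first by rewrite muln0. rewrite IH; case: b IH => /= _; lia. Qed.

Lemma cnt_br_hi d k s : size d = t.-1 -> k < t.-1 -> k <= s <= t.-1 ->
  cnt (br d k) s = cnt d k + (~~ nth false d k) * (s - k).
Proof.
move=> Hs Hk /andP [H1 H2]; rewrite /cnt /br take_cat (size_takek Hs Hk).
case: ifP => H; first by lia.
by rewrite count_cat take_nseq ?count_nseq_id //; lia.
Qed.



Lemma br_off d k i j : size d = t.-1 -> k < t.-1 -> k < i + j ->
  onp (br d k) (i,j) -> ~~ onp d (i,j).
Proof.
rewrite /onp /= => Hs Hk Hv /andP [H1 /eqP H2]; rewrite H1 /=.
move: H2; rewrite (cnt_br_hi Hs Hk); last by apply/andP; split; lia.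
have := cnt_le d (ltnW Hv); have := cnt_le d Hv; rewrite (cnt_S _ ); last by lia.
case: (nth false d k) => /= /andP [A1 A2] /andP [B1 B2] E; apply/eqP; lia.
Qed.

Lemma br_disj d k k' i j : size d = t.-1 -> k < k' -> k' < t.-1 ->
  onp (br d k) (i,j) -> onp (br d k') (i,j) -> ~~ onp d (i,j) -> False.
Proof.
move=> Hs Hkk Hk' Hb Hb' Hd.
have Hk : k < t.-1 by lia.
move: Hb Hb' Hd; rewrite /onp /= => /andP [H1 /eqP H2] /andP [_ /eqP H3].
rewrite H1 /= => /eqP H4.
case: (leqP (i + j) k') => Hle.
  by apply: H4; rewrite -(@cnt_br_lo d k') //.
move: H2 H3; rewrite (cnt_br_hi Hs Hk); last by apply/andP; split; lia.
rewrite (cnt_br_hi Hs Hk'); last by apply/andP; split; lia.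
have := cnt_le d (ltnW Hkk); have := cnt_le d Hkk; rewrite (cnt_S _ ); last by lia.
case: (nth false d k); case: (nth false d k') => /= /andP [A1 A2] /andP [B1 B2] E1 E2; lia.
Qed.

Definition lst (x : seq bool) : seq nat :=
  (if X x (0,0) then [:: 1] else [::]) ++ [seq (nid u).*2 | u <- nodes & holds0 u x].

Lemma in_lst x dc : dc \in lst x ->
  (X x (0,0) /\ dc = 1) \/ (exists2 u : nat * nat, u \in nodes & holds0 u x /\ dc = (nid u).*2).
Proof.
rewrite mem_cat; case/orP.
  by case: (X x (0,0)) => //; rewrite inE => /eqP ->; left.
by case/mapP => u; rewrite mem_filter => /andP [H1 H2] ->; right; exists u.
Qed.

Lemma lst_apex x : X x (0,0) -> 1 \in lst x.
Proof. by move=> H; rewrite mem_cat H inE eqxx. Qed.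

Lemma lst_node x u : u \in nodes -> holds0 u x -> (nid u).*2 \in lst x.
Proof.
by move=> H1 H2; rewrite mem_cat; apply/orP; right; apply: map_f; rewrite mem_filter H1 H2.
Qed.

Lemma lst_nil x : lst x != [::].
Proof.
case: (covering x) => [H|[u H1 H2]]; apply/eqP => E.
- by have := lst_apex H; rewrite E.
- by have := lst_node H1 H2; rewrite E.
Qed.

Variable cs : seq nat.
Hypothesis cs_uniq : uniq cs.
Hypothesis cs_big : tri t <= size cs.

Definition att v := nth 0 cs (nid v).
Definition vat (x : seq bool) a := nth false x (index a cs).
Definition consw x (w : seq (nat * bool)) := all (fun ab => vat x ab.1 == ab.2) w.

Lemma index_att v : v \in nodes -> index (att v) cs = nid v.
Proof.
rewrite mem_nodes => H; apply: index_uniq => //.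
by apply: leq_trans (nid_lt H) cs_big.
Qed.

Lemma vat_att x v : v \in nodes -> vat x (att v) = X x v.
Proof. by move=> H; rewrite /vat index_att. Qed.

Definition onids d := [seq nid u | u <- nodes & onp d u].
Definition xd d := [seq ~~ (k \in onids d) | k <- iota 0 (size cs)].

Lemma size_xd d : size (xd d) = size cs.
Proof. by rewrite size_map size_iota. Qed.

Lemma nth_xd d k : k < size cs -> nth false (xd d) k = ~~ (k \in onids d).
Proof. by move=> H; rewrite (nth_map 0) ?size_iota // nth_iota. Qed.

Lemma X_xd d v : v \in nodes -> X (xd d) v = ~~ onp d v.
Proof.
move=> H; rewrite /X nth_xd; last first.
  by apply: leq_trans (nid_lt _) cs_big; rewrite -mem_nodes.
by rewrite /onids (mem_map nid_inj) mem_filter H andbT.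
Qed.

Definition avoids d (w : seq (nat * bool)) := all (fun ab => ab.2 ==> vat (xd d) ab.1) w.

Definition Inv w :=
  (exists d, size d = t.-1 /\ consw (xd d) w) /\
  (forall d, size d = t.-1 -> avoids d w -> consw (xd d) w).

Lemma Inv_nil : Inv [::].
Proof. by split=> //; exists (nseq t.-1 false); rewrite size_nseq. Qed.

Lemma fixlit w x0 k b : size x0 = size cs -> consw x0 w -> k < size cs ->
  (forall x, size x = size cs -> consw x w -> nth false x k = b) ->
  (nth 0 cs k, b) \in w.
Proof.
move=> Hs0 Hc0 Hk Hall.
case Eh: (has (fun ab => ab.1 == nth 0 cs k) w).
- move/hasP: Eh => [[a b'] Hin /= /eqP Ea]; subst a.
  have E1 := Hall x0 Hs0 Hc0.
  move/allP: Hc0 => /(_ _ Hin) /= /eqP; rewrite /vat (index_uniq 0 Hk cs_uniq) E1 => ->.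
  exact: Hin.
- exfalso; move/negbT/hasPn: Eh => Eh.
  set y := set_nth false x0 k (~~ nth false x0 k).
  have Hsy : size y = size cs by rewrite size_set_nth Hs0; apply/maxn_idPr.
  have Hcy : consw y w.
    apply/allP => [[a b'] Hin]; move/allP: Hc0 => /(_ _ Hin) /=.
    rewrite /vat /y nth_set_nth /=; case: (index a cs =P k) => // E.
    have Hak : a = nth 0 cs k.
      case Ha: (a \in cs); first by rewrite -E nth_index.
      by move: Hk; rewrite -E memNindex ?Ha // ltnn.
    by move: (Eh _ Hin); rewrite /= Hak eqxx.
  have := Hall y Hsy Hcy; have := Hall x0 Hs0 Hc0.
  rewrite /y nth_set_nth /= eqxx => ->; by destruct b.
Qed.

Lemma vat_true_node x (d : seq bool) a :
  vat x a -> size x = size cs -> index a cs < size cs.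
Proof.
move=> H Hs; rewrite ltnNge; apply/negP => Hle.
by move: H; rewrite /vat nth_default // Hs.
Qed.

Lemma xd_false_node d a : index a cs < size cs -> ~~ vat (xd d) a ->
  exists2 v, v \in nodes & onp d v /\ nid v = index a cs.
Proof.
move=> Hk; rewrite /vat nth_xd // negbK => /mapP [v]; rewrite mem_filter.
by case/andP => H1 H2 E; exists v.
Qed.

Lemma leaf_bound w dc : Inv w ->
  (forall x, size x = size cs -> consw x w -> dc \in lst x) -> t <= size w.
Proof.
move=> [[d1 [Hs1 Hc1]] Hinv] Hall.
set x1 := xd d1.
have Hsx1 : size x1 = size cs by rewrite size_xd.
have Hn00 : (0,0) \in nodes by rewrite mem_nodes.
case: (in_lst (Hall x1 Hsx1 Hc1)) => [[]|[u Hu [Hh Edc]]].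
  by rewrite /x1 X_xd // onp_apex.
have Hall2 : forall x, size x = size cs -> consw x w -> holds0 u x.
  move=> x Hs Hc; case: (in_lst (Hall x Hs Hc)) => [[_ E]|[u' Hu' [Hh' E]]].
    by move: Edc; rewrite E; case: (nid u).
  by move: E; rewrite Edc => /double_inj /nid_inj ->.
have Hud1 : onp d1 u by move: Hh; rewrite /holds0 /x1 X_xd // negbK => /andP [].
move: Hh; rewrite /holds0; case: ifP => Hsrc; last first.
  have Hlt : u.1 + u.2 < t by rewrite -mem_nodes.
  have Hne : u.1 + u.2 <> t.-1 by move=> E; move: Hsrc; rewrite E eqxx.
  have Et : t = t.-1.+1 by rewrite prednK.
  have HL : (u.1.+1, u.2) \in nodes by rewrite mem_nodes /=; lia.
  have HR : (u.1, u.2.+1) \in nodes by rewrite mem_nodes /=; lia.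
  rewrite /x1 !X_xd // => /andP [_ /andP [A B]].
  by have := onp_step Hs1 Hud1 (negbT Hsrc); rewrite (negbTE A) (negbTE B).
move=> _.
have Hnu : nid u < size cs by apply: leq_trans (nid_lt _) cs_big; rewrite -mem_nodes.
have Hlit : (att u, false) \in w.
  apply: (fixlit Hsx1 Hc1 Hnu) => x Hs Hc.
  by have := Hall2 x Hs Hc; rewrite /holds0 => /andP [/negbTE].
have Hfin : forall d, size d = t.-1 -> avoids d w -> onp d u.
  move=> d Hs Ha; move/allP: (Hinv d Hs Ha) => /(_ _ Hlit) /=.
  by rewrite vat_att // X_xd // => /eqP /negbFE.
move/eqP: Hsrc => Hsrc.
pose P k := fun ab : nat * bool => ab.2 && ~~ vat (xd (br d1 k)) ab.1.
pose f k := nth (0, false) w (find (P k) w).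
have Hf : forall k, k < t.-1 -> [/\ f k \in w, (f k).2 &
   exists2 v, v \in nodes & [/\ onp (br d1 k) v, ~~ onp d1 v & nid v = index (f k).1 cs]].
  move=> k Hk.
  have Hsb := size_br Hs1 Hk.
  have Hnb : ~~ onp (br d1 k) u.
    apply/negP => Hb; move: (@br_off d1 k u.1 u.2 Hs1 Hk).
    rewrite Hsrc -surjective_pairing => /(_ Hk Hb); by rewrite Hud1.
  have Hhas : has (P k) w.
    apply/negPn/negP => Hn; apply/negP: Hnb; rewrite negbK; apply: Hfin => //.
    apply/allP => ab Hab; move/hasPn: Hn => /(_ _ Hab); rewrite /P negb_and negbK.
    by case: (ab.2).
  have Hfw : f k \in w by rewrite /f mem_nth // -has_find.
  have := nth_find (0, false) Hhas; rewrite -/(f k) /P => /andP [H2 H3].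
  split => //.
  have Hv1 : vat x1 (f k).1.
    by move/allP: Hc1 => /(_ _ Hfw) /eqP ->.
  have Hidx := vat_true_node d1 Hv1 Hsx1.
  case: (xd_false_node Hidx H3) => v Hv [Hon Eid].
  exists v => //; split => //.
  by move: Hv1; rewrite /vat -Eid -/(X x1 v) /x1 X_xd.
pose L := (att u, false) :: map f (iota 0 t.-1).
have HL : uniq L.
  rewrite /L cons_uniq; apply/andP; split.
    apply/mapP => [[k]]; rewrite mem_iota add0n => Hk E.
    by case: (Hf k Hk) => _; rewrite -E.
  rewrite map_inj_in_uniq ?iota_uniq //.
  move=> k k'; rewrite !mem_iota !add0n => Hk Hk' E.
  case: (Hf k Hk) => _ _ [v Hv [A B C]].
  case: (Hf k' Hk') => _ _ [v' Hv' [A' B' C']].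
  have Evv : v = v' by apply: nid_inj; rewrite C C' E.
  subst v'.
  case: (ltngtP k k') => // Hkk; exfalso.
  - move: A A' B; case: v {Hv Hv' C C' B'} => i j A A' B.
    exact: (@br_disj d1 k k' i j Hs1 Hkk Hk' A A' B).
  - move: A A' B; case: v {Hv Hv' C C' B'} => i j A A' B.
    exact: (@br_disj d1 k' k i j Hs1 Hkk Hk A' A B).
have HLw : {subset L <= w}.
  move=> ab; rewrite inE => /orP [/eqP -> //|/mapP [k]].
  by rewrite mem_iota add0n => Hk ->; case: (Hf k Hk).
have := uniq_leq_size HL HLw; rewrite /= size_map size_iota; lia.
Qed.

Fixpoint height (r : dnode) : nat :=
  match r with
  | DLeaf _ => 0
  | DNode _ ch => (foldr maxn 0 (map (fun bc => let: (_, c) := bc in height c) ch)).+1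
  end.

Lemma foldr_maxn_ge (s : seq nat) x : x \in s -> x <= foldr maxn 0 s.
Proof.
elim: s => //= y s IH; rewrite inE => /orP [/eqP ->|H]; first exact: leq_maxl.
by apply: leq_trans (IH H) (leq_maxr _ _).
Qed.

Lemma In_map_mem (A : Type) (B : eqType) (f : A -> B) (s : seq A) y :
  List.In y s -> f y \in map f s.
Proof. elim: s => //= z s IH [->|H]; rewrite inE ?eqxx //; by rewrite IH ?orbT. Qed.

Lemma all_In (A : Type) (P : pred A) (s : seq A) y : all P s -> List.In y s -> P y.
Proof. elim: s => //= z s IH /andP [H1 H2] [<-|H] //; exact: IH. Qed.

Lemma height_child a (ch : seq (bool * dnode)) b c :
  List.In (b, c) ch -> height c < height (DNode a ch).
Proof.
move=> H; rewrite /= ltnS; apply: foldr_maxn_ge.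
exact: (In_map_mem (fun bc : bool * dnode => let: (_, c) := bc in height c) H).
Qed.

Lemma node_pathsP a (ch : seq (bool * dnode)) p : p \in node_paths (DNode a ch) ->
  exists b c p', [/\ List.In (b, c) ch, p' \in node_paths c & p = ((a, b) :: p'.1, p'.2)].
Proof.
rewrite /=; elim: ch => //= [[b c] ch IH]; rewrite mem_cat => /orP [|H].
- by case/mapP => p' Hp' ->; exists b, c, p'; split => //; left.
- by case: (IH H) => b' [c' [p' [H1 H2 H3]]]; exists b', c', p'; split => //; right.
Qed.

Lemma node_paths_in a (ch : seq (bool * dnode)) b c p' : List.In (b, c) ch ->
  p' \in node_paths c -> ((a, b) :: p'.1, p'.2) \in node_paths (DNode a ch).
Proof.
move=> H1 H2; rewrite /=; elim: ch H1 => //= [[b0 c0] ch IH] [[E1 E2]|H].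
- by subst; rewrite mem_cat (map_f (fun p => ((a, b) :: p.1, p.2)) H2).
- by rewrite mem_cat IH ?orbT.
Qed.

Lemma uniq_fst_eq (s : seq (bool * dnode)) b c c' :
  uniq (map fst s) -> List.In (b, c) s -> List.In (b, c') s -> c = c'.
Proof.
elim: s => //= [[b0 c0] s IH] /andP [Hn Hu].
case=> [[E1 E2]|H1]; case=> [[E3 E4]|H2]; subst => //.
- by move: Hn; rewrite (In_map_mem fst H2).
- by move: Hn; rewrite (In_map_mem fst H1).
- by apply: IH.
Qed.

Lemma consw_cat x w1 w2 : consw x (w1 ++ w2) = consw x w1 && consw x w2.
Proof. by rewrite /consw all_cat. Qed.

Lemma avoids_cat d w1 w2 : avoids d (w1 ++ w2) = avoids d w1 && avoids d w2.
Proof. by rewrite /avoids all_cat. Qed.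

Lemma adv n : forall r w, height r <= n -> det_node r -> Inv w ->
  (forall x, size x = size cs -> consw x w -> exists2 p, p \in node_paths r & consw x p.1) ->
  exists2 p, p \in node_paths r & Inv (w ++ p.1).
Proof.
elim: n => [|n IH] [dl|a ch] w //= Hh Hdet Hinv Hcov.
- by exists ([::], dl); rewrite ?inE // cats0.
- by exists ([::], dl); rewrite ?inE // cats0.
case/andP: Hdet => Huq Hall.
have [b Hb] : exists b, Inv (w ++ [:: (a, b)]).
  case: (classic (exists d, size d = t.-1 /\ avoids d w /\ vat (xd d) a)).
  - move=> [d0 [Hs0 [Ha0 Hv0]]]; exists true; split.
      by exists d0; split => //; rewrite consw_cat (proj2 Hinv d0) //= Hv0.
    move=> d Hs; rewrite avoids_cat consw_cat => /andP [Ha]; rewrite /= andbT => Hv.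
    by rewrite (proj2 Hinv d) //= Hv.
  - move=> Hno; exists false; split.
      case: Hinv => [[d1 [Hs1 Hc1]] Hinv']; exists d1; split => //.
      rewrite consw_cat Hc1 /= andbT eqbF_neg; apply/negP => Hv.
      apply: Hno; exists d1; split => //; split => //.
      apply/allP => ab Hab; move/allP: Hc1 => /(_ _ Hab) /eqP ->; by case: (ab.2).
    move=> d Hs; rewrite avoids_cat consw_cat => /andP [Ha _].
    rewrite (proj2 Hinv d) //= andbT eqbF_neg; apply/negP => Hv.
    by apply: Hno; exists d.
case: (Hb) => [[d' [Hs' Hc']] _].
have Hsx' : size (xd d') = size cs by rewrite size_xd.
move: (Hc'); rewrite consw_cat => /andP [Hcw Hab].
case: (Hcov _ Hsx' Hcw) => p /node_pathsP [b' [c [p' [Hbc Hp' Ep]]]].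
rewrite Ep /consw /= => /andP [Hab' _].
move: Hab; rewrite /consw /= andbT => /eqP Hab.
move: Hab'; rewrite Hab => /eqP Ebb; subst b'.
have Hdc : det_node c by apply: (all_In (P := fun bc : bool * dnode => let: (_, c) := bc in det_node c) Hall Hbc).
have Hhc : height c <= n.
  by move: (height_child a Hbc) => /=; rewrite ltnS => /leq_trans; apply.
have Hcovc : forall x, size x = size cs -> consw x (w ++ [:: (a, b)]) ->
    exists2 p, p \in node_paths c & consw x p.1.
  move=> x Hs; rewrite consw_cat => /andP [Hxw Hxa].
  case: (Hcov x Hs Hxw) => q /node_pathsP [b'' [c'' [q' [Hbc'' Hq' Eq]]]].
  rewrite Eq /consw /= => /andP [Hxa' Hq].
  move: Hxa; rewrite /consw /= andbT => /eqP Hxa.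
  move: Hxa'; rewrite Hxa => /eqP Eb; subst b''.
  have Ecc := uniq_fst_eq Huq Hbc Hbc''; subst c''.
  by exists q'.
case: (IH c _ Hhc Hdc Hb Hcovc) => q Hq Hinvq.
exists ((a, b) :: q.1, q.2).
  exact: (node_paths_in a Hbc Hq).
by move: Hinvq; rewrite -catA.
Qed.

Definition nu (x : seq bool) : {fset nat} := seq_fset tt (lst x).

Lemma in_nu x dc : (dc \in nu x) = (dc \in lst x).
Proof. by rewrite /nu seq_fsetE. Qed.

Lemma nu_neq0 x : nu x != fset0.
Proof.
apply/eqP => E; have := lst_nil x; case E2: (lst x) => [|y s] //= _.
have := in_nu x y; rewrite E E2 in_fset0 inE eqxx; done.
Qed.

Definition gdec (x : seq bool) : nat := head 0 (lst x).

Lemma gdec_in x : gdec x \in nu x.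
Proof.
rewrite in_nu /gdec; have := lst_nil x; case: (lst x) => //= y s _.
by rewrite inE eqxx.
Qed.

Fixpoint fullT (c : seq nat) (pre : seq bool) : dnode :=
  match c with
  | [::] => DLeaf (gdec pre)
  | a :: c' => DNode a [:: (false, fullT c' (rcons pre false)); (true, fullT c' (rcons pre true))]
  end.

Lemma fullT_paths c pre p : p \in node_paths (fullT c pre) ->
  exists2 bs, size bs = size c & p = (zip c bs, gdec (pre ++ bs)).
Proof.
elim: c pre p => [|a c IH] pre p /=.
  by rewrite inE => /eqP ->; exists [::] => //; rewrite cats0.
rewrite cats0 mem_cat => /orP [] /mapP [p' /IH [bs Hs ->] ->] /=.
- by exists (false :: bs); rewrite /= ?Hs // -cats1 -catA.
- by exists (true :: bs); rewrite /= ?Hs // -cats1 -catA.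
Qed.

Lemma fullT_paths_in c pre bs : size bs = size c ->
  (zip c bs, gdec (pre ++ bs)) \in node_paths (fullT c pre).
Proof.
elim: c pre bs => [|a c IH] pre [|b bs] //=.
  by rewrite cats0 inE.
move=> [Hs]; rewrite cats0 mem_cat.
have E : pre ++ b :: bs = rcons pre b ++ bs by rewrite -cats1 -catA.
case: b E => E; apply/orP; [right|left]; apply/mapP.
- by exists (zip c bs, gdec (rcons pre true ++ bs)); rewrite ?IH // E.
- by exists (zip c bs, gdec (rcons pre false ++ bs)); rewrite ?IH // E.
Qed.

Lemma fullT_det c pre : det_node (fullT c pre).
Proof. by elim: c pre => [|a c IH] pre //=; rewrite !IH. Qed.

Lemma fullT_wf c pre : wf_node (fullT c pre).
Proof. by elim: c pre => [|a c IH] pre //=; rewrite !IH. Qed.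

Lemma fullT_attrs c pre : {subset node_attrs (fullT c pre) <= c}.
Proof.
elim: c pre => [|a c IH] pre y //=; rewrite inE => /orP [/eqP ->|]; first by rewrite inE eqxx.
by rewrite cats0 mem_cat => /orP [] /IH H; rewrite inE H orbT.
Qed.

Lemma mem_subtable T w r : (r \in rows (subtable T w)) =
  (r \in rows T) && all (fun ab => val_at T r.1 ab.1 == ab.2) w.
Proof.
have H := mem_filter (fun r => all (fun ab => val_at T r.1 ab.1 == ab.2) w) r (rows T).
rewrite andbC -H /subtable; case: (filter _ _) => [|r0 s] //.
Qed.
Lemma dummy_mem : True.
Proof. by []. 
Qed.

Variable Q : table.
Hypothesis Qwf : wf_table Q.
Hypothesis Qcomp : complete Q.
Hypothesis Qcols : cols Q = cs.

Definition Q' := Table cs [seq (r.1, nu r.1) | r <- rows Q].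

Lemma rowsQ_size r : r \in rows Q -> size r.1 = size cs.
Proof.
by case/and5P: Qwf => _ /allP H _ _ _ /H /eqP; rewrite Qcols.
Qed.

Lemma rowsQ_all x : size x = size cs -> x \in map fst (rows Q).
Proof.
move=> Hx; case Hn: (x \in map fst (rows Q)) => //; exfalso.
case/and5P: Qwf => _ Hall Huq _ _.
set m := size cs.
pose t0 := [tuple of nseq m false].
pose tup (y : seq bool) : m.-tuple bool := insubd t0 y.
set s := x :: map fst (rows Q).
have Hsz : forall y, y \in s -> size y = m.
  move=> y; rewrite inE => /orP [/eqP -> //|/mapP [r Hr ->]]; exact: rowsQ_size.
have Hus : uniq s by rewrite /= Hn Huq.
have Hut : uniq (map tup s).
  rewrite map_inj_in_uniq // => y1 y2 H1 H2 E.
  have := congr1 val E; rewrite !val_insubd.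
  by rewrite (Hsz _ H1) (Hsz _ H2) eqxx.
have := uniq_leq_size Hut (fun y _ => mem_enum {: m.-tuple bool} y).
rewrite -cardE card_tuple card_bool size_map /= size_map.
by move/eqP: Qcomp => ->; rewrite Qcols ltnn.
Qed.

Lemma mem_Q' r : r \in rows Q' <-> size r.1 = size cs /\ r.2 = nu r.1.
Proof.
split.
- by case/mapP => r0 Hr0 -> /=; split => //; exact: rowsQ_size.
- case: r => x S /= [Hs ->]; case/mapP: (rowsQ_all Hs) => r0 Hr0 E.
  by apply/mapP; exists r0 => //; rewrite E.
Qed.

Lemma mem_subQ' w r : r \in rows (subtable Q' w) <->
  (size r.1 = size cs /\ r.2 = nu r.1) /\ consw r.1 w.
Proof.
rewrite mem_subtable; split.
- by case/andP => /mem_Q' H1 H2.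
- by case=> /mem_Q' H1 H2; rewrite H1.
Qed.

Lemma consw_zip x : size x = size cs -> consw x (zip cs x).
Proof.
move=> Hs; apply/allP => [[a b]] /(nthP (0, false)) [k Hk E].
move: Hk; rewrite size_zip Hs minnn => Hk.
move: E; rewrite nth_zip ?Hs // => [[<- <-]] /=.
by rewrite /vat index_uniq.
Qed.

Lemma consw_zip_eq x bs : size x = size cs -> size bs = size cs ->
  consw x (zip cs bs) -> x = bs.
Proof.
move=> Hx Hb /allP Hc; apply: (@eq_from_nth _ false); first by rewrite Hx Hb.
move=> k Hk; rewrite Hx in Hk.
have Hin : (nth 0 cs k, nth false bs k) \in zip cs bs.
  rewrite -nth_zip //; apply: mem_nth; rewrite size_zip Hb minnn //.
by move: (Hc _ Hin) => /= /eqP; rewrite /vat index_uniq.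
Qed.

Lemma Gfull_dt : is_dt Q' [:: fullT cs [::]].
Proof.
split; last by rewrite /det_tree /= fullT_det.
split.
- by rewrite /wf_tree /= fullT_wf.
- by move=> a; rewrite /tree_attrs /= cats0 => /fullT_attrs.
- move=> r /mem_Q' [Hs Hr]; exists (zip cs r.1, gdec ([::] ++ r.1)).
    rewrite /tree_paths /= cats0; exact: (fullT_paths_in [::] Hs).
  by apply/mem_subQ'; split => //; apply: consw_zip.
- move=> p; rewrite /tree_paths /= cats0 => /fullT_paths [bs Hbs ->] /=.
  right => r /mem_subQ' [[Hs ->] Hc].
  by rewrite (consw_zip_eq Hs Hbs Hc) gdec_in.
Qed.

Lemma att_in v : v \in nodes -> att v \in cs.
Proof.
rewrite mem_nodes => H; apply: mem_nth.
by apply: leq_trans (nid_lt H) cs_big.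
Qed.

Definition certword (u : nat * nat) : seq (nat * bool) :=
  if u.1 + u.2 == t.-1 then [:: (att u, false)]
  else [:: (att u, false); (att (u.1.+1, u.2), true); (att (u.1, u.2.+1), true)].

Definition certnode (u : nat * nat) : dnode :=
  if u.1 + u.2 == t.-1 then DNode (att u) [:: (false, DLeaf (nid u).*2)]
  else DNode (att u) [:: (false, DNode (att (u.1.+1, u.2))
          [:: (true, DNode (att (u.1, u.2.+1)) [:: (true, DLeaf (nid u).*2)])])].

Lemma certnode_paths u : node_paths (certnode u) = [:: (certword u, (nid u).*2)].
Proof. by rewrite /certnode /certword; case: ifP. Qed.

Definition apexnode := DNode (att (0,0)) [:: (true, DLeaf 1)].

Definition Gnd : dtree := apexnode :: map certnode nodes.

Lemma Gnd_paths p : p \in tree_paths Gnd ->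
  p = ([:: (att (0,0), true)], 1) \/ exists2 u, u \in nodes & p = (certword u, (nid u).*2).
Proof.
rewrite /tree_paths /= inE => /orP [/eqP ->|]; first by left.
rewrite -map_comp => /flatten_mapP [u Hu] /=; rewrite certnode_paths inE => /eqP ->.
by right; exists u.
Qed.

Lemma child_nodes u : u \in nodes -> u.1 + u.2 != t.-1 ->
  (u.1.+1, u.2) \in nodes /\ (u.1, u.2.+1) \in nodes.
Proof.
rewrite !mem_nodes /= => H /eqP Hne.
have Et : t = t.-1.+1 by rewrite prednK.
split; lia.
Qed.

Lemma certword_cons x u : u \in nodes -> consw x (certword u) = holds0 u x.
Proof.
move=> Hu; rewrite /certword /holds0 /consw; case: ifP => Hs /=.
  by rewrite vat_att // !andbT eqbF_neg.
case: (child_nodes Hu (negbT Hs)) => HL HR.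
by rewrite !vat_att // andbT !eqb_id eqbF_neg andbA.
Qed.

Lemma Gnd_ndt : is_ndt Q' Gnd.
Proof.
have Hn00 : (0,0) \in nodes by rewrite mem_nodes.
split.
- rewrite /wf_tree /= all_map; apply/allP => u Hu /=.
  by rewrite /certnode; case: ifP.
- move=> a; rewrite /tree_attrs /= inE => /orP [/eqP ->|]; first exact: att_in.
  rewrite -map_comp => /flatten_mapP [u Hu] /=; rewrite /certnode; case: ifP => Hs /=.
    by rewrite inE => /eqP ->; apply: att_in.
  case: (child_nodes Hu (negbT Hs)) => HL HR.
  by rewrite !inE => /or3P [] /eqP ->; apply: att_in.
- move=> r /mem_Q' [Hs Hr].
  case: (covering r.1) => [H|[u Hu Hh]].
  + exists ([:: (att (0,0), true)], 1).
      by rewrite /tree_paths /= inE eqxx.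
    apply/mem_subQ'; split => //; by rewrite /consw /= vat_att // H.
  + exists (certword u, (nid u).*2).
      rewrite /tree_paths /= inE; apply/orP; right.
      rewrite -map_comp; apply/flatten_mapP; exists u => //=.
      by rewrite certnode_paths inE.
    by apply/mem_subQ'; split => //; rewrite certword_cons.
- move=> p /Gnd_paths [->|[u Hu ->]] /=; right => r /mem_subQ' [[Hs ->] Hc];
    rewrite in_nu.
  + by apply: lst_apex; move: Hc; rewrite /consw /= vat_att // andbT => /eqP.
  + by apply: lst_node => //; rewrite -certword_cons.
Qed.

Variable psi : seq nat -> nat.
Hypothesis Hpsi : bounded_measure psi.
Variable nn : nat.
Hypothesis Hcolpsi : forall a, a \in cs -> psi [:: a] <= nn.

Lemma psi3 a b c : psi [:: a; b; c] <= psi [:: a] + psi [:: b] + psi [:: c].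
Proof.
case: Hpsi => [[_ _ _ Hsub] _].
have := Hsub [:: a] [:: b; c]; have := Hsub [:: b] [:: c]; rewrite /=; lia.
Qed.

Lemma Gnd_psi : tree_psi psi Gnd <= 3 * nn.
Proof.
have Hn00 : (0,0) \in nodes by rewrite mem_nodes.
have H3 : nn <= 3 * nn by lia.
apply/bigmax_leqP_seq => p /Gnd_paths [->|[u Hu ->]] _ /=.
  exact: leq_trans (Hcolpsi (att_in Hn00)) H3.
rewrite /certword; case: ifP => Hs /=.
  exact: leq_trans (Hcolpsi (att_in Hu)) H3.
case: (child_nodes Hu (negbT Hs)) => HL HR.
apply: leq_trans (psi3 _ _ _) _.
rewrite (_ : 3 * nn = nn + nn + nn); last by lia.
by rewrite !leq_add // Hcolpsi // att_in.
Qed.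

Lemma dt_lower G : is_dt Q' G -> t <= tree_psi psi G.
Proof.
case=> [[Hwf Hattr Hcov Hval]] /andP [/eqP Hsz Hdet].
case: G Hsz Hwf Hattr Hcov Hval Hdet => [|r [|]] //= _ Hwf Hattr Hcov Hval.
rewrite andbT => Hdet.
have Htp : tree_paths [:: r] = node_paths r by rewrite /tree_paths /= cats0.
have Hloc : forall x, size x = size cs -> consw x [::] ->
    exists2 p, p \in node_paths r & consw x p.1.
  move=> x Hs _; have Hrow : (x, nu x) \in rows Q' by apply/mem_Q'.
  case: (Hcov _ Hrow) => p; rewrite Htp => Hp /mem_subQ' [_ Hc].
  by exists p.
case: (adv (leqnn (height r)) Hdet Inv_nil Hloc) => p Hp; rewrite cat0s => Hinv.
have Hp' : p \in tree_paths [:: r] by rewrite Htp.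
have Hbound : t <= size p.1.
  apply: (@leaf_bound _ p.2 Hinv) => x Hs Hc.
  have Hrow : (x, nu x) \in rows (subtable Q' p.1) by apply/mem_subQ'.
  case: (Hval p Hp') => [E|H]; first by rewrite E in Hrow.
  by rewrite -in_nu; apply: (H _ Hrow).
apply: leq_trans Hbound _.
have H1 := @leq_bigmax_seq _ (tree_paths [:: r]) xpredT (fun p => psi (map fst p.1)) p Hp' isT.
apply: leq_trans H1; rewrite -(size_map fst).
by case: Hpsi => _; apply.
Qed.
End Pyr.

Lemma ex_min_nat (P : nat -> Prop) : (exists k, P k) -> exists k, P k /\ forall j, P j -> k <= j.
Proof.
move=> [k0 Hk0].
suff H : forall m, (exists2 k, k <= m & P k) -> exists k, P k /\ forall j, P j -> k <= j.
  by apply: (H k0); exists k0.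
elim=> [|m IH] [k Hk HP].
  move: Hk; rewrite leqn0 => /eqP E; subst k; by exists 0; split.
case: (classic (exists2 k, k <= m & P k)) => [H|H]; first exact: IH.
exists k; split => // j Hj; case: (leqP k j) => // Hlt; exfalso; apply: H.
exists j => //; lia.
Qed.

Lemma map_index_nth (c : seq nat) (x : seq bool) : uniq c -> size x = size c ->
  [seq nth false x (index a c) | a <- c] = x.
Proof.
move=> Hu Hs; apply: (@eq_from_nth _ false); first by rewrite size_map Hs.
move=> k; rewrite size_map => Hk.
by rewrite (nth_map 0) // index_uniq.
Qed.

Lemma keep_first_id (s : seq (seq bool * {fset nat})) : uniq (map fst s) -> keep_first s = s.
Proof.
elim: s => //= r s IH /andP [Hn Hu]; rewrite IH //; congr (_ :: _).
apply/all_filterP/allP => r' Hr'; apply/negP => /eqP E.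
by move: Hn; rewrite -E map_f.
Qed.

Lemma map_fix_in (T : eqType) (f : T -> T) s : (forall x, x \in s -> f x = x) -> map f s = s.
Proof.
elim: s => //= a s IH H; rewrite H ?mem_head // IH // => x Hx.
by apply: H; rewrite inE Hx orbT.
Qed.

Lemma opI_nil Q : wf_table Q -> cols Q != [::] -> opI [::] Q = Q.
Proof.
case: Q => c rs /= Hwf Hc.
case/and5P: Hwf => /= Hu /allP Hall Huq _ _.
rewrite /opI /=.
have -> : [seq a <- c | a \notin [::]] = c by apply/all_filterP/allP.
case: c Hc Hu Hall => [|a0 c'] //= _ Hu Hall.
have -> : [seq ([seq val_at {| cols := a0 :: c'; rows := rs |} r.1 a | a <- a0 :: c'], r.2) | r <- rs] = rs.
  apply: map_fix_in; case=> x S Hin /=.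
  have Hs : size x = size (a0 :: c') by move: (Hall _ Hin) => /eqP.
  have E := @map_index_nth (a0 :: c') x Hu Hs.
  by apply: (f_equal2 pair) => //; exact: E.
by rewrite keep_first_id.
Qed.

Lemma closure_cols T Q : in_closure T Q -> {subset cols Q <= cols T}.
Proof.
case=> D [nu0 [_ [_ ->]]] a; rewrite /opJ /opI /=.
have : {subset [seq a <- cols T | a \notin D] <= cols T}.
  by move=> b; rewrite mem_filter => /andP [].
case: [seq a <- cols T | a \notin D] => [|b s] //= H; exact: H.
Qed.

Lemma core A psi n T Q t : in_M A -> closed_class A -> bounded_measure psi ->
  A T -> m_psi psi T <= n -> in_closure T Q -> complete Q -> 0 < t ->
  tri t <= size (cols Q) -> exists k, Hset psi A (3 * n) k /\ t <= k.
Proof.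
move=> HM Hcl Hpsi HT Hm HTQ Hcomp Ht Htri.
have HQ : A Q by apply/Hcl; exists T.
have Hwf := HM _ HQ.
have Hu : uniq (cols Q) by case/and5P: Hwf.
have Hcolpsi : forall a, a \in cols Q -> psi [:: a] <= n.
  move=> a /(closure_cols HTQ) Ha; apply: leq_trans Hm.
  exact: (@leq_bigmax_seq _ (cols T) xpredT (fun a => psi [:: a]) a Ha isT).
have Hne : cols Q != [::].
  apply/eqP => E; move: Htri; rewrite E /=.
  by case: t Ht => // t' _ /=; lia.
set Q2 := opJ (nu t) (opI [::] Q).
have EQ2 : Q2 = Q' t (cols Q) Q by rewrite /Q2 opI_nil.
have HQ2 : A Q2.
  apply/Hcl; exists Q; split => //; exists [::], (nu t); split => //; split => //.
  exact: nu_neq0.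
have Hrows : nonempty_table Q2.
  rewrite EQ2 /nonempty_table /= size_map.
  by move/eqP: Hcomp => ->; rewrite -lt0n expn_gt0.
have [a [[Ga [HGa EGa]] Hamin]] :
    exists a, (exists G, is_ndt Q2 G /\ tree_psi psi G = a) /\
              forall j, (exists G, is_ndt Q2 G /\ tree_psi psi G = j) -> a <= j.
  apply: ex_min_nat; exists (tree_psi psi (Gnd t (cols Q))).
  by exists (Gnd t (cols Q)); split => //; rewrite EQ2; exact: (Gnd_ndt Ht Hu Htri Hwf Hcomp (erefl _)).
have [k [[Gk [HGk EGk]] Hkmin]] :
    exists k, (exists G, is_dt Q2 G /\ tree_psi psi G = k) /\
              forall j, (exists G, is_dt Q2 G /\ tree_psi psi G = j) -> k <= j.
  apply: ex_min_nat; exists (tree_psi psi [:: fullT t (cols Q) [::]]).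
  by exists [:: fullT t (cols Q) [::]]; split => //; rewrite EQ2; exact: (Gfull_dt Ht Hu Hwf Hcomp (erefl _)).
exists k; split.
- exists Q2; split => //.
  + exists a.
      rewrite /is_psia Hrows; split; first by exists Ga.
      by move=> G HG; apply: Hamin; exists G.
    apply: leq_trans (Hamin _ _) (Gnd_psi Ht Hu Htri Hwf Hcomp Hpsi Hcolpsi).
    by exists (Gnd t (cols Q)); split => //; rewrite EQ2; exact: (Gnd_ndt Ht Hu Htri Hwf Hcomp (erefl _)).
  + rewrite /is_psid Hrows; split; first by exists Gk.
    by move=> G HG; apply: Hkmin; exists G.
- rewrite -EGk; apply: (dt_lower Ht Hu Htri Hwf Hcomp (erefl _) Hpsi).
  by rewrite -EQ2.
Qed.

Lemma ex_max_nat (P : nat -> Prop) B : (exists k, P k) -> (forall k, P k -> k <= B) ->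
  exists m, P m /\ forall k, P k -> k <= m.
Proof.
move=> [k0 Hk0] HB.
case: (@ex_min_nat (fun j => j <= B /\ P (B - j))).
  by exists (B - k0); split; [apply: leq_subr|rewrite subKn ?HB].
move=> j [[Hj HPj] Hmin]; exists (B - j); split => // k Hk.
have := Hmin (B - k) (conj (leq_subr _ _) _); rewrite subKn ?HB // => /(_ Hk).
have := HB _ Hk; lia.
Qed.

Lemma filter_self_nil (s : seq nat) : [seq a <- s | a \notin s] = [::].
Proof.
apply/eqP; rewrite -[_ == _]negbK -has_filter; apply/hasPn => a Ha.
by rewrite Ha.
Qed.

Lemma Lambda_in A : closed_class A -> nontrivial A -> A Lambda.
Proof.
move=> Hcl [T0 [HT0 _]]; apply/Hcl; exists T0; split => //.
exists (cols T0), (nu 1); split => //; split; first exact: (nu_neq0 (ltn0Sn 0)).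
by rewrite /opI filter_self_nil.
Qed.

Lemma Z_Lambda : is_Z Lambda 0.
Proof. by right; split => // Q [D [nu0 [_ [_ ->]]]]. Qed.

Lemma tri_ge s : s <= tri s.
Proof. elim: s => //= s IH; lia. Qed.

Lemma Zset_bound A psi n h3 : in_M A -> closed_class A -> bounded_measure psi ->
  H_value psi A (3 * n) h3 -> forall k, Zset psi A n k -> exists t, [/\ tri t <= k < tri t.+1 & t <= h3].
Proof.
move=> HM Hcl Hpsi [_ Hmax] k [T [HT Hm HZ]].
case: (tri_ex k) => t /andP [H1 H2]; exists t; split; first by rewrite H1 H2.
case: t H1 H2 => // t H1 H2.
case: HZ => [[Q [HTQ Hcomp Hsz _]]|[_ Ek]]; last first.
  by move: H1; rewrite Ek /=; lia.
have Htri : tri t.+1 <= size (cols Q) by rewrite Hsz.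
have [kk [Hkk Htk]] := @core A psi n T Q t.+1 HM Hcl Hpsi HT Hm HTQ Hcomp (ltn0Sn _) Htri.
exact: leq_trans Htk (Hmax _ Hkk).
Qed.

From Stdlib Require Import Reals Lra.

Lemma real_bound (z t : nat) : z < tri t.+1 -> (sqrt (2 * INR z) - 3 <= INR t)%R.
Proof.
move=> Hz.
have Hn : (2 * z <= (t + 2) * (t + 2))%N.
  have := tri2 t.+1; lia.
move: Hn; rewrite -!multE -!plusE => /leP /le_INR; rewrite !mult_INR !plus_INR /= => H.
have Ht := pos_INR t.
have Hs : (sqrt (2 * INR z) <= INR t + 2)%R.
  rewrite -(sqrt_square (INR t + 2)); last by lra.
  apply: sqrt_le_1_alt; lra.
lra.
Qed.

Theorem lemma12 (A : table -> Prop) (psi : seq nat -> nat) :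
  in_M A -> closed_class A -> nontrivial A -> bounded_measure psi ->
  (forall n, H_defined psi A n) ->
  forall n : nat,
    Z_defined psi A n /\
    (forall z h : nat, Z_value psi A n z -> H_value psi A (3 * n) h ->
       (sqrt (2 * INR z) - 3 <= INR h)%R).
Proof.
move=> HM Hcl Hnt Hpsi HH n.
split.
- case: (HH (3 * n)) => h3 Hh3.
  case: (@ex_max_nat (Zset psi A n) (tri h3.+1)).
  + exists 0, Lambda; split; [exact: Lambda_in|by rewrite /m_psi big_nil|exact: Z_Lambda].
  + move=> k Hk; case: (Zset_bound HM Hcl Hpsi Hh3 Hk) => t [/andP [_ H2] H3].
    apply: ltnW; apply: leq_trans H2 _; apply: tri_mono; by rewrite ltnS.
  + by move=> m Hm; exists m.
- move=> z h [Hz _] Hh.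
  case: (Zset_bound HM Hcl Hpsi Hh Hz) => t [/andP [_ H2] H3].
  apply: Rle_trans (real_bound H2) _.
  by apply: le_INR; apply/leP.
Qed.
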